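(* Let $\pi$ be a block-constructed permutation. Then $\pi$ is transposition Lagrangian.
   Context: Work on $\mathcal{A}=\{1,\dots,d\}$ with $\pi_0=\mathrm{id}$, so $\pi=(\mathrm{id},\pi_1)$ is identified with $\pi_1\in\mathfrak{S}_d$ (position of letter $k$ in the bottom row is $\pi_1(k)$). A permutation is block-constructed if $\pi_1(1)=d$, $\pi_1(d)=1$ (standard), and $\{2,\dots,d-1\}$ is partitioned into consecutive intervals $\{j,\dots,j+n-1\}$ with $n\in\{1,2,3,4,5\}$ on each of which $\pi_1$ reverses the order: $\pi_1(k)=2j+n-1-k$ for $j\le k\le j+n-1$. (These are exactly the standard permutations whose interior is a concatenation of the blocks $\begin{pmatrix}\alpha\\\alpha\end{pmatrix}$, $\begin{pmatrix}\alpha_1\alpha_2\dots\alpha_n\\\alpha_n\dots\alpha_1\end{pmatrix}$ for $n=2,\dots,5$; in particular they are self-inverse.) Define $\Omega=\Omega_\pi$ by $\Omega_{\alpha,\beta}=1$ if $\pi_0(\alpha)<\pi_0(\beta)$ and $\pi_1(\alpha)>\pi_1(\beta)$, $-1$ if $\pi_0(\alpha)>\pi_0(\beta)$ and $\pi_1(\alpha)<\pi_1(\beta)$, $0$ otherwise; $g(\pi)=\tfrac12\mathrm{rank}\,\Omega_\pi$ (the genus). Let $\pi_{\mathcal{A}}=\pi_0^{-1}\circ\pi_1$, $\mathbf{e}_{\mathcal{B}}=\sum_{\alpha\in\mathcal{B}}\mathbf{e}_\alpha$, $\mathbf{v}_{\mathcal{B}}=\Omega\mathbf{e}_{\mathcal{B}}$.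 A self-inverse $\pi$ is transposition Lagrangian if $\dim\mathrm{span}\{\mathbf{v}_{\mathcal{B}}:\mathcal{B}\text{ an orbit of }\pi_{\mathcal{A}},\#\mathcal{B}=2\}=\#\{\text{such orbits}\}=g(\pi)$. *)

(* Defs.v *)
From mathcomp Require Import all_boot all_order all_algebra all_fingroup.
Set Implicit Arguments. Unset Strict Implicit. Unset Printing Implicit Defensive.
Import GRing.Theory Num.Theory.
Local Open Scope ring_scope.

(* Alphabet {1,...,d} is modelled by 'I_d = {0,...,d-1} (letter k <-> ordinal k-1).
   pi_0 = id, so pi is identified with pi_1 : {perm 'I_d}; pi i is the (0-based)
   position of letter i in the bottom row. *)

Fixpoint blocks_ok (d : nat) (pi : {perm 'I_d}) (j : nat) (ns : seq nat) : Prop :=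
  match ns with
  | [::] => True
  | n :: ns' =>
      (0 < n <= 5)%N /\
      (forall i : 'I_d, (j <= i < j + n)%N -> val (pi i) = (j + j + n).-1 - i)%N /\
      blocks_ok pi (j + n) ns'
  end.

Definition block_constructed (d : nat) (pi : {perm 'I_d}) : Prop :=
  (forall i : 'I_d, val i = 0%N -> val (pi i) = d.-1) /\
  (forall i : 'I_d, val i = d.-1 -> val (pi i) = 0%N) /\
  exists ns : seq nat, sumn ns = (d - 2)%N /\ blocks_ok pi 1 ns.

Definition Omega (d : nat) (pi : {perm 'I_d}) : 'M[rat]_d :=
  \matrix_(a, b)
    (if ((a < b)%N && (pi b < pi a)%N) then 1
     else if ((b < a)%N && (pi a < pi b)%N) then -1 else 0).

Definition genus (d : nat) (pi : {perm 'I_d}) : nat := (\rank (Omega pi))./2.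

(* pi_A = pi_0^{-1} o pi_1 = pi_1 since pi_0 = id *)
Definition piA (d : nat) (pi : {perm 'I_d}) : {perm 'I_d} := pi.

Definition orbits2 (d : nat) (pi : {perm 'I_d}) : {set {set 'I_d}} :=
  [set B in porbits (piA pi) | #|B| == 2%N].

Definition e_vec (d : nat) (B : {set 'I_d}) : 'cV[rat]_d :=
  \col_a (if a \in B then 1 else 0).

Definition v_vec (d : nat) (pi : {perm 'I_d}) (B : {set 'I_d}) : 'cV[rat]_d :=
  Omega pi *m e_vec B.

Definition span_dim (d : nat) (pi : {perm 'I_d}) : nat :=
  \rank (\sum_(B in orbits2 pi) <<(v_vec pi B)^T>>)%MS.

Definition self_inverse (d : nat) (pi : {perm 'I_d}) : Prop := (pi * pi = 1)%g.

Definition transposition_Lagrangian (d : nat) (pi : {perm 'I_d}) : Prop :=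
  self_inverse pi /\
  span_dim pi = #|orbits2 pi| /\ #|orbits2 pi| = genus pi.

(* Main.v *)
Require Import Defs.
From mathcomp Require Import all_boot all_order all_algebra all_fingroup.
From mathcomp Require Import zify ring lra.
Set Implicit Arguments. Unset Strict Implicit. Unset Printing Implicit Defensive.
Import GRing.Theory Num.Theory.
Local Open Scope ring_scope.

Lemma rank_sum_le (I : finType) (P : {pred I}) n (A_ : I -> 'rV[rat]_n) :
  (\rank (\sum_(i in P) <<A_ i>>)%MS <= #|P|)%N.
Proof.
rewrite -sum1_card.
elim/big_rec2: _ => [|i k M Pi IH]; first by rewrite mxrank0.
apply: leq_trans (mxrank_adds_leqif _ _) _.
by rewrite leq_add // mxrank_gen rank_leq_row.
Qed.

Lemma rank_pivots n (S : {set 'I_n}) (w : 'I_n -> 'rV[rat]_n) (m : 'I_n -> nat) :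
  (forall s, s \in S -> w s 0 s != 0) ->
  (forall s t, s \in S -> t \in S -> s != t -> (m s <= m t)%N -> w s 0 t = 0) ->
  (#|S| <= \rank (\sum_(s in S) <<w s>>)%MS)%N.
Proof.
move=> Hnz Hz.
have [b] := ubnP #|S|; elim: b S Hnz Hz => // b IH S Hnz Hz Hb.
case: (set_0Vmem S) => [->|[x xS]]; first by rewrite cards0.
pose s0 := @fintype.arg_max _ x (fun i => i \in S) m.
have [s0S s0max] : s0 \in S /\ forall t, t \in S -> (m t <= m s0)%N.
  by rewrite /s0; case: arg_maxnP.
pose S' := S :\ s0.
have cS : #|S| = (#|S'|).+1 by rewrite (cardsD1 s0 S) s0S.
have IH' : (#|S'| <= \rank (\sum_(s in S') <<w s>>)%MS)%N.
  apply: IH => [s sS|s t sS tS|]; first exact: Hnz s (subsetP (subD1set S s0) s sS).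
    exact: Hz s t (subsetP (subD1set S s0) s sS) (subsetP (subD1set S s0) t tS).
  by rewrite -ltnS -cS.
rewrite (bigD1 s0) //= cS.
have -> : (\sum_(i in S | i != s0) <<w i>>)%MS = (\sum_(i in S') <<w i>>)%MS.
  by apply: eq_bigl => i; rewrite !inE andbC.
apply: leq_ltn_trans IH' _.
apply: rank_ltmx; rewrite ltmxE addsmxSr /=.
apply/negP => sub.
pose f := delta_mx s0 (0 : 'I_1) : 'cV[rat]_n.
have kS : ((\sum_(i in S') <<w i>>)%MS <= kermx f)%MS.
  apply/sumsmx_subP => t tS'; rewrite genmxE; apply/sub_kermxP.
  apply/rowP => z; rewrite ord1 !mxE (bigD1 s0) //= big1 => [|k kne].
    rewrite !mxE !eqxx /= mulr1 addr0.
    move: tS'; rewrite !inE => /andP[tne tS].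
    by apply: Hz => //; apply: s0max.
  by rewrite /f !mxE (negbTE kne) /= mulr0.
have : (w s0 <= kermx f)%MS.
  apply: submx_trans kS; apply: submx_trans sub.
  by apply: submx_trans (addsmxSl _ _); rewrite genmxE.
  move/sub_kermxP/rowP/(_ 0).
rewrite !mxE (bigD1 s0) //= big1 => [|k kne]; last by rewrite /f !mxE (negbTE kne) /= mulr0.
by rewrite /f !mxE !eqxx mulr1 addr0 => /eqP; rewrite (negbTE (Hnz s0 s0S)).
Qed.

Definition sg (o k : nat) : rat := if (k < o)%N then 1 else if (o < k)%N then -1 else 0.
Definition tab : seq (seq (seq rat)) :=
 [:: [::]; [:: [::0]]; [:: [::0;-1]; [::1;0]];
  [:: [::1;-1;0]; [::0;0;0]; [::0;1;-1]];
  [:: [::0;-1;1;-1]; [::1;0;-1;1]; [::-1;1;0;-1]; [::1;-1;1;0]];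
  [:: [::1;-2;1;0;0]; [::0;1;-1;0;0]; [::0;0;0;0;0]; [::0;0;1;-1;0]; [::0;0;-1;2;-1]] ].
Definition coef (n o k : nat) : rat := nth 0 (nth [::] (nth [::] tab n) o) k.
Definition fixtab : seq (seq rat) := [:: [::]; [::0]; [::]; [::1;0;1]; [::]; [::-1;1;0;1;-1]].
Definition fixc (n k : nat) : rat := nth 0 (nth [::] fixtab n) k.

Lemma chk_piv n o o' : (0 < n <= 5)%N -> (o < n)%N -> (o' < n)%N ->
  (o.*2.+1 != n)%N -> (o'.*2.+1 != n)%N ->
  \sum_(k < n) coef n o k * sg o' k = (o == o')%:R.
Proof.
move=> hn ho ho' h1 h2.
do 6?[case: n hn ho ho' h1 h2 => [|n] hn ho ho' h1 h2; last first]; try lia;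
do 6?[case: o ho h1 => [|o] ho h1; last first]; try lia;
do 6?[case: o' ho' h2 => [|o'] ho' h2; last first]; try lia;
rewrite /coef /= !big_ord_recr big_ord0 /= /sg /=; lra.
Qed.

Lemma chk_fix n o' : (n <= 5)%N -> odd n -> (o' < n)%N ->
  \sum_(k < n) fixc n k * sg o' k = sg o' n./2.
Proof.
move=> hn hodd ho'.
do 6?[case: n hn hodd ho' => [|n] hn hodd ho'; last first]; try lia;
do 6?[case: o' ho' => [|o'] ho'; last first]; try lia;
rewrite /fixc /= !big_ord_recr big_ord0 /= /sg /=; lra.
Qed.

Fixpoint blk_of (j : nat) (ns : seq nat) (i : nat) : nat * nat :=
  if ns is n :: ns' then (if (i < j + n)%N then (j, n) else blk_of (j + n) ns' i) else (j, 0%N).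

Section Main.
Variable m : nat.
Local Notation d := m.+2.
Variable pi : {perm 'I_d}.
Hypothesis H0 : nat_of_ord (pi ord0) = m.+1.
Hypothesis H1 : nat_of_ord (pi ord_max) = 0%N.

Definition cut (c : nat) := forall b : 'I_d, (0 < b < m.+1)%N -> (b < c)%N = (pi b < c)%N.
Definition good (j n : nat) := [/\ (0 < j)%N, (0 < n <= 5)%N, (j + n <= m.+1)%N,
  (forall k : 'I_d, (j <= k < j + n)%N -> nat_of_ord (pi k) = (j + j + n).-1 - k)%N
  & cut j /\ cut (j + n)].

Variables bj bn : nat -> nat.
Hypothesis Hblk : forall i : 'I_d, (0 < i < m.+1)%N ->
  good (bj i) (bn i) /\ (bj i <= i < bj i + bn i)%N.

Lemma pi_eq_max b : nat_of_ord (pi b) = m.+1 -> nat_of_ord b = 0%N.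
Proof.
move=> h; have : pi b = pi ord0 by apply: val_inj; rewrite /= h H0.
by move/perm_inj->.
Qed.

Lemma pi_eq0 b : nat_of_ord (pi b) = 0%N -> nat_of_ord b = m.+1.
Proof.
move=> h; have : pi b = pi ord_max by apply: val_inj; rewrite /= h H1.
by move/perm_inj->.
Qed.

Lemma ord0E (b : 'I_d) : nat_of_ord b = 0%N -> b = ord0.
Proof. by move=> h; apply: val_inj. Qed.
Lemma ordmaxE (b : 'I_d) : nat_of_ord b = m.+1 -> b = ord_max.
Proof. by move=> h; apply: val_inj. Qed.

Lemma piK i : pi (pi i) = i.
Proof.
suff h : nat_of_ord (pi (pi i)) = nat_of_ord i by apply: val_inj.
have ltd := ltn_ord i.
case: (eqVneq (nat_of_ord i) 0%N) => [i0|i0].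
  by rewrite (ord0E i0) (ordmaxE H0) H1.
case: (eqVneq (nat_of_ord i) m.+1) => [im|im].
  by rewrite (ordmaxE im) (ord0E H1) H0.
have hi : (0 < i < m.+1)%N by lia.
have [[jp np lim rev _] hin] := Hblk hi.
have e1 := rev i hin.
have hin2 : (bj i <= pi i < bj i + bn i)%N by lia.
have e2 := rev (pi i) hin2.
lia.
Qed.

Lemma OmE a b : Omega pi a b =
  if (a < b)%N && (pi b < pi a)%N then 1 else if (b < a)%N && (pi a < pi b)%N then -1 else 0.
Proof. by rewrite mxE. Qed.

Lemma ord0v : nat_of_ord (@ord0 m.+1) = 0%N. Proof. by []. Qed.
Lemma ordmaxv : nat_of_ord (@ord_max m.+1) = m.+1. Proof. by []. Qed.
Ltac brute := have ? := ord0v; have ? := ordmaxv; repeat (case: ifP => ?); try done; exfalso; lia.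

Lemma Om_first a b : nat_of_ord a = 0%N ->
  Omega pi a b = if nat_of_ord b == 0%N then 0 else 1.
Proof.
move=> a0; rewrite OmE (ord0E a0) H0.
have ? := ltn_ord b; have ? := ltn_ord (pi b).
case: (eqVneq (nat_of_ord (pi b)) m.+1) => [/pi_eq_max|] ?; brute.
Qed.

Lemma Om_last a b : nat_of_ord a = m.+1 ->
  Omega pi a b = if nat_of_ord b == m.+1 then 0 else -1.
Proof.
move=> a0; rewrite OmE (ordmaxE a0) H1.
have ? := ltn_ord b; have ? := ltn_ord (pi b).
case: (eqVneq (nat_of_ord (pi b)) 0%N) => [/pi_eq0|] ?; brute.
Qed.

Lemma Om_blk j n (a b : 'I_d) : good j n -> (j <= a < j + n)%N ->
  Omega pi a b = if nat_of_ord b == 0%N then -1 else if nat_of_ord b == m.+1 then 1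
    else if (j <= b < j + n)%N then (if (a < b)%N then 1 else if (b < a)%N then -1 else 0)
    else 0.
Proof.
move=> [j0 n05 jn rev [cj cjn]] ha.
have ea := rev a ha.
rewrite OmE.
have ? := ltn_ord b; have ? := ltn_ord (pi b).
case: (eqVneq (nat_of_ord b) 0%N) => [b0|b0].
  by rewrite (ord0E b0) H0; brute.
case: (eqVneq (nat_of_ord b) m.+1) => [bm|bm].
  by rewrite (ordmaxE bm) H1; brute.
have hb : (0 < b < m.+1)%N by lia.
case: (boolP (j <= b < j + n)%N) => hbb.
  have eb := rev b hbb; brute.
have ? := cj b hb; have ? := cjn b hb; brute.
Qed.


Definition rw (i : 'I_d) : 'rV[rat]_d := row i (Omega pi).
Definition tv (a : 'I_d) : 'rV[rat]_d := rw a - rw ord0 - rw ord_max.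

Lemma rwE i b : rw i 0 b = Omega pi i b.
Proof. by rewrite /rw mxE. Qed.

Lemma tv_entry j n (a b : 'I_d) : good j n -> (j <= a < j + n)%N ->
  tv a 0 b = if (j <= b < j + n)%N then sg (b - j) (a - j) else 0.
Proof.
move=> g ha; have [j0 n05 jn rev _] := g.
have -> : tv a 0 b = Omega pi a b - Omega pi ord0 b - Omega pi ord_max b.
  by rewrite /tv /rw !mxE.
rewrite (Om_blk b g ha) (@Om_first ord0 b erefl) (@Om_last ord_max b erefl) /sg.
have ? := ord0v; have ? := ordmaxv; have ? := ltn_ord b.
repeat (case: ifP => ?); try (exfalso; lia); lra.
Qed.

Definition Lv j n (c : nat -> rat) : 'rV[rat]_d :=
  \sum_(k < n) c k *: tv (inord (j + k)).

Lemma Lv_entry j n c b : good j n ->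
  Lv j n c 0 b = if (j <= b < j + n)%N then \sum_(k < n) c k * sg (b - j) k else 0.
Proof.
move=> g; have [j0 n05 jn rev _] := g.
rewrite /Lv summxE; case: ifP => hb.
  apply: eq_bigr => k _; rewrite mxE.
  have hk : (j + k < m.+2)%N by have := ltn_ord k; lia.
  rewrite (tv_entry b g) ?inordK // ?hb; last by have := ltn_ord k; lia.
  by rewrite addKn.
apply: big1 => k _; rewrite mxE.
have hk : (j + k < m.+2)%N by have := ltn_ord k; lia.
by rewrite (tv_entry b g) ?inordK ?hb ?mulr0 //; have := ltn_ord k; lia.
Qed.

Lemma subv_sub (A B : 'rV[rat]_d) n' (C : 'M[rat]_(n', d)) :
  (A <= C)%MS -> (B <= C)%MS -> (A - B <= C)%MS.
Proof. by move=> hA hB; apply: addmx_sub => //; rewrite -scaleN1r scalemx_sub. Qed.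

Lemma Lv_sub j n c : (Lv j n c <= Omega pi)%MS.
Proof.
apply: summx_sub => k _; apply: scalemx_sub.
by rewrite /tv !subv_sub // /rw row_sub.
Qed.

Lemma piX i x : (pi ^+ i)%g x = if odd i then pi x else x.
Proof.
elim: i x => [|i IH] x; first by rewrite expg0 perm1.
by rewrite expgS permM IH /=; case: (odd i); rewrite ?piK.
Qed.

Lemma porbit_pi x : porbit pi x = [set x; pi x].
Proof.
apply/setP => y; rewrite !inE; apply/idP/idP => [/porbitP[i ->]|/orP[/eqP->|/eqP->]]; [|apply/porbitP..].
- by rewrite piX; case: (odd i); rewrite eqxx ?orbT.
- by exists 0%N; rewrite expg0 perm1.
- by exists 1%N; rewrite expg1.
Qed.

Definition S0 := [set x : 'I_d | (x < pi x)%N].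
Definition S := [set x : 'I_d | pi x != x].

Lemma orbits2E : orbits2 pi = (fun s => [set s; pi s]) @: S0.
Proof.
apply/setP => B; rewrite /orbits2 inE; apply/andP/imsetP.
- move=> [/imsetP[x _ ->]]; rewrite porbit_pi cards2 eqSS eqb1 /piA => nx.
  have nx' : nat_of_ord x != nat_of_ord (pi x) by rewrite val_eqE.
  case: (ltngtP x (pi x)) => h.
  + by exists x; rewrite // inE.
  + exists (pi x); first by rewrite inE piK.
    by rewrite piK setUC.
  + by move: nx'; rewrite h eqxx.
- move=> [s]; rewrite inE => hs ->; split.
  + by rewrite /piA -porbit_pi; apply: imset_f.
    rewrite cards2; have -> // : (s != pi s) = true.
    by apply/negP => /eqP he; move: hs; rewrite -he ltnn.
Qed.

Lemma card_orbits2 : #|orbits2 pi| = #|S0|.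
Proof.
rewrite orbits2E; apply: card_in_imset => s t; rewrite !inE => hs ht he.
have : s \in [set t; pi t] by rewrite -he !inE eqxx.
rewrite !inE => /orP[/eqP //|/eqP est].
have := piK t; rewrite -est => ept.
have e1 : nat_of_ord s = nat_of_ord (pi t) by rewrite est.
have e2 : nat_of_ord (pi s) = nat_of_ord t by rewrite ept.
lia.
Qed.

Lemma card_S : #|S| = (#|S0|).*2.
Proof.
pose S1 := [set x : 'I_d | (pi x < x)%N].
have -> : S = S0 :|: S1.
  apply/setP => x; rewrite !inE -val_eqE /=.
  by case: ltngtP.
have -> : S1 = pi @: S0.
  apply/setP => x; apply/idP/imsetP => [hx|[y hy ->]].
    by exists (pi x); rewrite ?piK // inE piK; move: hx; rewrite inE.
  by rewrite inE piK; move: hy; rewrite inE.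
rewrite cardsU card_imset; last exact: perm_inj.
have -> : S0 :&: pi @: S0 = set0.
  apply/setP => x; rewrite !inE; apply/negP => /andP[h1 /imsetP[y hy ex]].
  by move: h1 hy; rewrite ex piK inE; lia.
by rewrite cards0 subn0 addnn.
Qed.

Lemma noncross (s t : 'I_d) : (s < pi s)%N -> (s < t < pi s)%N -> (t < pi t)%N -> (pi t < pi s)%N.
Proof.
move=> h1 h2 h3; have ? := ltn_ord (pi t); have ? := ltn_ord (pi s).
case: (eqVneq (nat_of_ord s) 0%N) => s0.
  rewrite (ord0E s0) H0.
  by case: (eqVneq (nat_of_ord (pi t)) m.+1) => [/pi_eq_max|] ?; lia.
have hs : (0 < s < m.+1)%N by lia.
have [[j0 n05 jn rev _] hin] := Hblk hs.
have e1 := rev s hin.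
have ht : (bj s <= t < bj s + bn s)%N by lia.
have e2 := rev t ht.
lia.
Qed.

Lemma evE (B : {set 'I_d}) b : e_vec B b 0 = if b \in B then 1 else 0.
Proof. by rewrite mxE. Qed.

Lemma ventry (s t : 'I_d) : pi s != s ->
  ((v_vec pi [set s; pi s])^T) 0 t = Omega pi t s + Omega pi t (pi s).
Proof.
move=> ns.
have -> : ((v_vec pi [set s; pi s])^T) 0 t =
   \sum_b Omega pi t b * e_vec [set s; pi s] b 0 by rewrite !mxE.
rewrite (bigD1 s) // (bigD1 (pi s)) /=; last by rewrite ns.
rewrite big1 => [|b /andP[h1 h2]]; last by rewrite evE !inE (negbTE h1) (negbTE h2) mulr0.
by rewrite !evE !inE !eqxx orbT !mulr1 addr0.
Qed.

Lemma span_lower : (#|S0| <= span_dim pi)%N.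
Proof.
pose w s := ((v_vec pi [set s; pi s])^T).
have nsS0 s : s \in S0 -> pi s != s.
  rewrite inE => h; apply/negP => /eqP he; move: h; rewrite he ltnn.
  by [].
apply: leq_trans (@rank_pivots _ S0 w (fun s => nat_of_ord s) _ _) _.
- move=> s hs; rewrite /w ventry ?nsS0 // !OmE piK.
  move: hs; rewrite inE => hs.
  have ? := ord0v; repeat (case: ifP => ?); try (exfalso; lia); by rewrite ?add0r ?oner_eq0.
- move=> s t hs ht nst hst; rewrite /w ventry ?nsS0 // !OmE piK.
  move: hs ht; rewrite !inE => hs ht.
  case: (eqVneq t (pi s)) => [ets|nts].
    by exfalso; move: ht; rewrite ets piK; lia.
  have nts' : nat_of_ord t != nat_of_ord (pi s) by rewrite val_eqE.
  have nst' : nat_of_ord s != nat_of_ord t by rewrite val_eqE.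
  case: (ltnP t (pi s)) => htp.
    have := @noncross s t hs (ltac:(lia)) ht => ?.
    repeat (case: ifP => ?); try (exfalso; lia); lra.
  repeat (case: ifP => ?); try (exfalso; lia); lra.
- apply: mxrankS; apply/sumsmx_subP => s hs.
  apply: (sumsmx_sup [set s; pi s]) => //.
  by rewrite orbits2E; apply: imset_f.
Qed.

Lemma span_upper : (span_dim pi <= #|orbits2 pi|)%N.
Proof. exact: rank_sum_le. Qed.

Lemma ord0_S : (ord0 : 'I_d) \in S.
Proof. by rewrite inE -val_eqE /= H0. Qed.
Lemma ordmax_S : (ord_max : 'I_d) \in S.
Proof. by rewrite inE -val_eqE /= H1. Qed.

Lemma interior (s : 'I_d) : s != ord0 -> s != ord_max -> (0 < s < m.+1)%N.
Proof.
rewrite -!val_eqE /= => h1 h2; have := ltn_ord s; lia.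
Qed.

Lemma fixc_mid n : (n <= 5)%N -> odd n -> fixc n n./2 = 0.
Proof. by case: n => [|[|[|[|[|[|n]]]]]]. Qed.

Lemma rank_upper : (\rank (Omega pi) <= #|S|)%N.
Proof.
apply: leq_trans (rank_sum_le S rw).
apply: mxrankS; apply/row_subP => i; change (rw i <= \sum_(s in S) <<rw s>>)%MS.
case: (boolP (i \in S)) => hi; first by apply: (sumsmx_sup i) => //; rewrite genmxE.
have fi : nat_of_ord (pi i) = nat_of_ord i.
  by apply/eqP; move: hi; rewrite inE negbK val_eqE.
have hint : (0 < i < m.+1)%N.
  apply: interior; apply/negP => /eqP ei; move: hi; rewrite ei.
    by rewrite ord0_S.
  by rewrite ordmax_S.
have [g hin] := Hblk hint.
have [j0 n05 jn rev _] := g.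
set j := bj i in g hin j0 jn rev *; set n := bn i in g hin n05 jn rev *.
have ei := rev i hin.
have hn : n = (i - j).*2.+1 by rewrite -addnn; lia.
have hodd : odd n by rewrite hn /= odd_double.
have hhalf : n./2 = (i - j)%N by rewrite hn /= uphalf_double.
have et : tv i = Lv j n (fixc n).
  apply/rowP => b; rewrite (tv_entry b g hin) (Lv_entry _ b g).
  case: ifP => // hb; rewrite chk_fix ?hhalf //; lia.
have -> : rw i = tv i + rw ord_max + rw ord0 by rewrite /tv !subrK.
have s0 : (rw ord0 <= \sum_(s in S) <<rw s>>)%MS.
  by apply: (sumsmx_sup ord0) => //; rewrite ?ord0_S ?genmxE.
have s1 : (rw ord_max <= \sum_(s in S) <<rw s>>)%MS.
  by apply: (sumsmx_sup ord_max) => //; rewrite ?ordmax_S ?genmxE.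
apply: addmx_sub => //; apply: addmx_sub => //; rewrite et.
apply: summx_sub => k _.
case: (eqVneq (nat_of_ord k) n./2) => hk.
  rewrite hk fixc_mid ?scale0r ?sub0mx //; lia.
apply: scalemx_sub; rewrite /tv !subv_sub //.
have hk' : (j + k < m.+2)%N by have := ltn_ord k; lia.
apply: (sumsmx_sup (inord (j + k))); last by rewrite genmxE.
rewrite inE -val_eqE /= rev ?inordK //; last by have := ltn_ord k; lia.
by apply/eqP; have := ltn_ord k; lia.
Qed.

Lemma addrwE a a' c : (rw a + rw a') 0 c = Omega pi a c + Omega pi a' c.
Proof. by rewrite /rw !mxE. Qed.

Lemma rank_lower : (#|S| <= \rank (Omega pi))%N.
Proof.
pose w (s : 'I_d) : 'rV[rat]_d := if s == ord0 then rw ord0 + rw ord_max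
  else if s == ord_max then rw ord0 else Lv (bj s) (bn s) (coef (bn s) (s - bj s)).
pose mm (s : 'I_d) : nat := if s == ord_max then 1%N else if s == ord0 then 2%N else 0%N.
have n0m : (ord0 : 'I_d) != ord_max by rewrite -val_eqE.
apply: leq_trans (@rank_pivots _ S w mm _ _) _.
- move=> s hs; rewrite /w.
  case: (eqVneq s ord0) => [->|s0].
    by rewrite addrwE (@Om_first ord0 ord0 erefl) (@Om_last ord_max ord0 erefl) /=.
  case: (eqVneq s ord_max) => [->|s1].
    by rewrite rwE (@Om_first ord0 ord_max erefl) /=.
  have hint := interior s0 s1.
  have [g hin] := Hblk hint.
  have [j0 n05 jn rev _] := g.
  have es := rev s hin.
  have ns : nat_of_ord (pi s) != nat_of_ord s by rewrite val_eqE; move: hs; rewrite inE.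
  rewrite Lv_entry // hin chk_piv ?eqxx ?oner_eq0 //; rewrite -?addnn; lia.
- move=> s t hs ht nst; rewrite /w /mm.
  case: (eqVneq s ord0) => [es|s0].
    subst s; rewrite ?eqxx (negbTE n0m).
    case: (eqVneq t ord0) => [et|nt]; first by move: nst; rewrite et eqxx.
    by case: ifP.
  case: (eqVneq s ord_max) => [es|s1].
    subst s; case: (eqVneq t ord_max) => [et|nt1]; first by move: nst; rewrite et eqxx.
    case: (eqVneq t ord0) => [et|nt0]; last by rewrite ?(negbTE nt1) ?(negbTE nt0).
    by subst t => _; rewrite rwE (@Om_first ord0 ord0 erefl).
  move=> _.
  have hint := interior s0 s1.
  have [g hin] := Hblk hint.
  have [j0 n05 jn rev _] := g.
  have es := rev s hin.
  have ns : nat_of_ord (pi s) != nat_of_ord s by rewrite val_eqE; move: hs; rewrite inE.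
  rewrite Lv_entry //; case: ifP => // htb.
  have et := rev t htb.
  have nt : nat_of_ord (pi t) != nat_of_ord t by rewrite val_eqE; move: ht; rewrite inE.
  have nst' : nat_of_ord s != nat_of_ord t by rewrite val_eqE.
  rewrite chk_piv; rewrite -?addnn; try lia.
  by have -> : (s - bj s == t - bj s)%N = false by lia.
- apply: mxrankS; apply/sumsmx_subP => s _; rewrite genmxE /w.
  case: ifP => _; first by apply: addmx_sub; rewrite /rw row_sub.
  case: ifP => _; first by rewrite /rw row_sub.
  exact: Lv_sub.
Qed.

Lemma rank_Omega : \rank (Omega pi) = #|S|.
Proof. by apply/eqP; rewrite eqn_leq rank_upper rank_lower. Qed.

Lemma TL : transposition_Lagrangian pi.
Proof.
split; first by apply/permP => i; rewrite permM perm1 piK.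
split.
  by apply/eqP; rewrite eqn_leq span_upper card_orbits2 span_lower.
by rewrite /genus rank_Omega card_S doubleK card_orbits2.
Qed.

Lemma cut1 : cut 1.
Proof.
move=> b hb; have ? := ltn_ord (pi b).
case: (eqVneq (nat_of_ord (pi b)) 0%N) => [/pi_eq0|] ?; lia.
Qed.

Lemma cut_next j n : cut j -> (0 < j)%N -> (j + n <= m.+1)%N ->
  (forall k : 'I_d, (j <= k < j + n)%N -> nat_of_ord (pi k) = (j + j + n).-1 - k)%N ->
  cut (j + n).
Proof.
move=> cj j0 jn rev b hb; have cjb := cj b hb.
case: (boolP (j <= b < j + n)%N) => hbb.
  by have := rev b hbb; lia.
case: (ltnP b j) => hbj; first by lia.
have hbj2 : (j + n <= b)%N by lia.
case: (ltnP (pi b) (j + n)) => hp; last by lia.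
exfalso.
have hk : ((j + j + n).-1 - pi b < m.+2)%N by lia.
pose k : 'I_d := inord ((j + j + n).-1 - pi b).
have kv : nat_of_ord k = ((j + j + n).-1 - pi b)%N by rewrite /k inordK.
have hkb : (j <= k < j + n)%N by lia.
have := rev k hkb; rewrite kv => e.
have : pi k = pi b by apply: val_inj => /=; lia.
move/perm_inj => ekb.
have : nat_of_ord k = nat_of_ord b by rewrite ekb.
lia.
Qed.

Lemma blocks_good j ns : blocks_ok pi j ns -> cut j -> (0 < j)%N -> (j + sumn ns <= m.+1)%N ->
  forall i : 'I_d, (j <= i < j + sumn ns)%N ->
  good (blk_of j ns i).1 (blk_of j ns i).2 /\
  ((blk_of j ns i).1 <= i < (blk_of j ns i).1 + (blk_of j ns i).2)%N.
Proof.
elim: ns j => [|n ns IH] j /=; first by move=> _ _ _ _ i; lia.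
move=> [hn [rev rest]] cj j0 hs i hi.
have cjn : cut (j + n) by apply: cut_next => //; lia.
case: ifP => hin /=.
  split; last by lia.
  split => //; first by lia.
apply: IH => //; lia.
Qed.

End Main.

Lemma small_TL n (pi : {perm 'I_n}) : (n <= 1)%N -> transposition_Lagrangian pi.
Proof.
move=> hn.
have all_eq : forall x y : 'I_n, x = y.
  move=> x y; suff : nat_of_ord x = nat_of_ord y by apply: val_inj.
  by have := ltn_ord x; have := ltn_ord y; lia.
have o2 : orbits2 pi = set0.
  apply/setP => B; rewrite inE /orbits2 inE; apply/negP => /andP[_ /eqP hB].
  by have := max_card B; rewrite hB card_ord; lia.
split; first by apply/permP => i; apply: all_eq.
have hs : span_dim pi = 0%N.
  by apply/eqP; rewrite -leqn0; apply: leq_trans (rank_sum_le _ _) _; rewrite o2 cards0.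
rewrite hs o2 cards0; split => //.
rewrite /genus; have := rank_leq_row (Omega pi).
by case: (\rank _) => [|[|r]] //; lia.
Qed.

Theorem mainTheorem11 (d : nat) (pi : {perm 'I_d}) :
  block_constructed pi -> transposition_Lagrangian pi.
Proof.
case: d pi => [|[|m]] pi; [by move=> _; apply: small_TL..|].
move=> [h0 [h1 [ns [hsum hok]]]].
apply: (@TL m pi _ _ (fun i => (blk_of 1 ns i).1) (fun i => (blk_of 1 ns i).2)).
- exact: h0 ord0 erefl.
- exact: h1 ord_max erefl.
- have H0 : nat_of_ord (pi ord0) = m.+1 by exact: h0 ord0 erefl.
  have H1 : nat_of_ord (pi ord_max) = 0%N by exact: h1 ord_max erefl.
  move=> i hi; apply: (blocks_good H0 H1 hok) => //.
  + exact: cut1.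
  + rewrite hsum; lia.
  + rewrite hsum; lia.
Qed.
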